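(* Let $\mathcal{Y}$ be a finite alphabet, $n\in\mathbb{N}$, and let $P_0,P_1\in\mathcal{P}(\mathcal{Y}^{\otimes n})$ be classical probability distributions, viewed as diagonal density matrices in the basis indexed by $\mathcal{Y}^{\times n}$. Then for every pair of density matrices $\rho,\sigma\in\mathrm{D}(\mathcal{Y}^{\otimes n})$ whose diagonals (in that basis) coincide with those of $P_0$ and $P_1$ respectively, and every $\varepsilon\in(0,1]$, one has $\xi^{\varepsilon}_{H}(\rho\|\sigma)\le\xi^{\varepsilon}_{H}(P_0\|P_1)$. Moreover, there exist classical $P_0,P_1$, a density matrix $\sigma$ with the same diagonal as $P_1$, and $\varepsilon\in(0,1)$ such that $\xi^{\varepsilon}_{H}(P_0\|\sigma)<\xi^{\varepsilon}_{H}(P_0\|P_1)$.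
   Context: $\mathcal{Y}^{\otimes n}$ denotes the complex Euclidean space with orthonormal basis indexed by sequences in $\mathcal{Y}^{\times n}$; $\mathrm{D}(\cdot)$ denotes density matrices (positive semidefinite, trace one) and $\mathcal{P}(\cdot)\subset\mathrm{D}(\cdot)$ those diagonal in the given basis (classical distributions). For $\rho\in\mathrm{D}(\mathcal{Y}^{\otimes n})$, $\sigma\succeq 0$ and $\varepsilon\in[0,1]$, the optimal type II error is $\xi^{\varepsilon}_{H}(\rho\|\sigma):=\min\{\mathrm{Tr}(\sigma A):\ 0\preceq A\preceq\mathbb{I},\ \mathrm{Tr}(\rho A)\ge 1-\varepsilon\}$. *)

(* Defs.v *)
From HB Require Import structures.
From mathcomp Require Import all_boot all_order all_algebra.
From mathcomp Require Import classical_sets reals.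
From mathcomp Require Import complex.
Set Implicit Arguments. Unset Strict Implicit. Unset Printing Implicit Defensive.
Import Order.TTheory GRing.Theory Num.Theory.
Local Open Scope ring_scope.
Local Open Scope classical_set_scope.

(* Dimension of Y^{\otimes n}: basis indexed by sequences in Y^{\times n}. *)
Definition dimYn (Y : finType) (n : nat) : nat := #|{: n.-tuple Y}|.

Section QHT.
Variable R : realType.
Local Notation C := (R[i]).

Definition adjmx (d : nat) (A : 'M[C]_d) : 'M[C]_d := (map_mx Num.conj A)^T.

(* positive semidefinite: Hermitian and v^* A v >= 0 (in the order of C,
   i.e. real and nonnegative) for every vector v *)
Definition psd (d : nat) (A : 'M[C]_d) : Prop :=
  adjmx A = A /\ forall v : 'cV[C]_d, 0 <= ((map_mx Num.conj v)^T *m A *m v) 0 0.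

Definition loewner (d : nat) (A B : 'M[C]_d) : Prop := psd (B - A).

Definition density (d : nat) (rho : 'M[C]_d) : Prop := psd rho /\ \tr rho = 1.

Definition classical (d : nat) (P : 'M[C]_d) : Prop :=
  density P /\ forall i j : 'I_d, i != j -> P i j = 0.

Definition is_test (d : nat) (A : 'M[C]_d) : Prop := loewner 0 A /\ loewner A 1%:M.

(* Tr(sigma A) is real for sigma, A psd; we take its real part and the
   infimum of the (nonempty, bounded below) set of values; the infimum is attained. *)
Definition xiH (d : nat) (eps : R) (rho sigma : 'M[C]_d) : R :=
  inf [set x : R | exists A : 'M[C]_d,
         [/\ is_test A, ((1 - eps)%:C)%C <= \tr (rho *m A) & x = complex.Re (\tr (sigma *m A))]].

End QHT.

(* Main.v *)
Require Import Defs.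
From HB Require Import structures.
From mathcomp Require Import all_boot all_order all_algebra.
From mathcomp Require Import boolp classical_sets reals.
From mathcomp Require Import complex.
Import Order.TTheory GRing.Theory Num.Theory.
Set Implicit Arguments. Unset Strict Implicit.
Local Open Scope ring_scope.

Section Aux.
Variable R : realType.
Local Notation C := (R[i]).

Definition adj' {m n} (A : 'M[C]_(m, n)) : 'M[C]_(n, m) := (map_mx Num.conj A)^T.

Lemma adj'M m n p (A : 'M[C]_(m, n)) (B : 'M[C]_(n, p)) :
  adj' (A *m B) = adj' B *m adj' A.
Proof. by rewrite /adj' map_mxM trmx_mul. Qed.

Lemma adj'K m n (A : 'M[C]_(m, n)) : adj' (adj' A) = A.
Proof. by apply/matrixP => i j; rewrite !mxE conjCK. Qed.

Lemma adj'Z m n c (A : 'M[C]_(m, n)) : adj' (c *: A) = c^* *: adj' A.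
Proof. by apply/matrixP => i j; rewrite !mxE rmorphM. Qed.

Lemma psd_ge0_diag d (M : 'M[C]_d) : psd M -> forall k, 0 <= M k k.
Proof.
move=> [_ H] k; move: (H (delta_mx k 0)).
have -> : (map_mx Num.conj (delta_mx k 0 : 'cV[C]_d)) = delta_mx k 0.
  by apply/matrixP => a b; rewrite !mxE; case: (_ && _); rewrite ?conjC1 ?conjC0.
by rewrite trmx_delta -rowE -colE !mxE.
Qed.

Lemma psd_diagmx d (c : 'rV[C]_d) : (forall k, 0 <= c 0 k) -> psd (diag_mx c).
Proof.
move=> c0; split.
  apply/matrixP => i j; rewrite /adjmx !mxE rmorphMn.
  case: eqP => [->|ne]; last by rewrite eq_sym; case: eqP => // /esym.
  rewrite eqxx !mulr1n; exact: geC0_conj.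
move=> v; rewrite mul_mx_diag !mxE; apply: sumr_ge0 => j _; rewrite !mxE.
rewrite mulrC mulrA; apply: mulr_ge0 => //; exact: mul_conjC_ge0.
Qed.

Lemma psd_diag d (M : 'M[C]_d) : psd M -> psd (diag_mx (\row_k M k k)).
Proof. by move=> /psd_ge0_diag h; apply: psd_diagmx => k; rewrite mxE. Qed.

Lemma psd_outer d (w : 'cV[C]_d) (c : C) : 0 <= c -> psd (c *: (w *m adj' w)).
Proof.
move=> c0; split.
  have -> : adjmx (c *: (w *m adj' w)) = adj' (c *: (w *m adj' w)) by [].
  rewrite adj'Z adj'M adj'K geC0_conj //.
move=> v; rewrite -/(adj' v) -scalemxAr -scalemxAl mxE; apply: mulr_ge0 => //.
rewrite !mulmxA -(mulmxA (adj' v *m w)).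
have -> : adj' w *m v = adj' (adj' v *m w) by rewrite adj'M adj'K.
rewrite !mxE big_ord1 !mxE; exact: mul_conjC_ge0.
Qed.


Lemma psd0 d : psd (0 : 'M[C]_d).
Proof.
split; first by apply/matrixP => i j; rewrite !mxE conjC0.
by move=> v; rewrite mulmx0 mul0mx mxE.
Qed.

Lemma psd1 d : psd (1%:M : 'M[C]_d).
Proof.
rewrite -diag_const_mx; apply: psd_diagmx => k; rewrite mxE; exact: ler01.
Qed.

Lemma tr_diagL d (P A : 'M[C]_d) : (forall i j : 'I_d, i != j -> P i j = 0) ->
  \tr (P *m A) = \sum_k P k k * A k k.
Proof.
move=> hP; rewrite /mxtrace; apply: eq_bigr => i _; rewrite mxE (bigD1 i) //=.
by rewrite big1 ?addr0 // => j ji; rewrite hP ?mul0r // eq_sym.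
Qed.

Lemma tr_diagR d (M A : 'M[C]_d) :
  \tr (M *m diag_mx (\row_k A k k)) = \sum_k M k k * A k k.
Proof. by rewrite mul_mx_diag /mxtrace; apply: eq_bigr => i _; rewrite !mxE. Qed.

Lemma test_diag d (A : 'M[C]_d) : is_test A -> is_test (diag_mx (\row_k A k k)).
Proof.
case; rewrite /loewner subr0 => pA p1A; split; rewrite /loewner ?subr0.
  have h := psd_diag pA. exact h.
have -> : 1%:M - diag_mx (\row_k A k k) = diag_mx (\row_k (1%:M - A) k k).
  apply/matrixP => i j; rewrite !mxE; case: eqP => [->|]; rewrite ?mulr1n ?mulr0n ?subr0 ?eqxx //.
exact: psd_diag.
Qed.

Lemma test1 d : is_test (1%:M : 'M[C]_d).
Proof. by split; rewrite /loewner ?subr0 ?subrr; [exact: psd1 | exact: psd0]. Qed.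

End Aux.

Lemma inf_le_sub (R : realType) (S1 S2 : set R) :
  (forall x, S2 x -> S1 x) -> (exists x, S2 x) -> (forall x, S2 x -> 0 <= x) ->
  inf S1 <= inf S2.
Proof.
move=> sub ne pos.
have [lb|nlb] := pselect (has_lbound S1).
  apply: lb_le_inf => // x /sub; exact: ge_inf.
rewrite inf_out; last by case.
exact: lb_le_inf.
Qed.


From mathcomp Require Import ring lra.

Lemma part1 (R : realType) d (P0 P1 rho sigma : 'M[R[i]]_d) (eps : R) :
     classical P0 -> classical P1 -> density rho -> density sigma ->
     (forall k, rho k k = P0 k k) -> (forall k, sigma k k = P1 k k) ->
     0 < eps <= 1 ->
     xiH eps rho sigma <= xiH eps P0 P1.
Proof.
move=> [[pP0 trP0] dP0] [[pP1 _] dP1] _ _ hr hs /andP[e0 e1].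
apply: inf_le_sub.
- move=> x [A [tA cA ->]]; exists (diag_mx (\row_k A k k)); split.
  + exact: test_diag.
  + by rewrite tr_diagR; under eq_bigr do rewrite hr; rewrite -tr_diagL.
  + by rewrite tr_diagR; under eq_bigr do rewrite hs; rewrite -tr_diagL.
- exists (complex.Re (\tr (P1 *m 1%:M))), 1%:M; split => //.
  + exact: test1.
  + rewrite mulmx1 trP0 lecE /= eqxx /=; lra.
- move=> x [A [[pA _] _ ->]]; rewrite tr_diagL //.
  have : 0 <= \sum_k P1 k k * A k k.
    apply: sumr_ge0 => k _; apply: mulr_ge0; apply: psd_ge0_diag => //.
    by move: pA; rewrite /loewner subr0.
  by rewrite lecE => /andP[_].
Qed.

Lemma inf_le0 (R : realType) (S : set R) : S 0 -> inf S <= 0.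
Proof.
move=> S0; have [lb|nlb] := pselect (has_lbound S); first exact: ge_inf.
by rewrite inf_out //; case.
Qed.

Lemma part2 (R : realType) :
  exists (P0 P1 sigma : 'M[R[i]]_2) (eps : R),
     [/\ classical P0, classical P1, density sigma, (forall k, sigma k k = P1 k k)
        & 0 < eps < 1] /\ xiH eps P0 sigma < xiH eps P0 P1.
Proof.
pose h' : R := 2^-1.
have h'0 : 0 <= h' by rewrite invr_ge0 ler0n.
have hh' : h' + h' = 1 by rewrite /h'; field.
pose h : R[i] := (h'%:C)%C.
have h0 : 0 <= h by rewrite ler0c.
have hh : h + h = 1 by rewrite /h -rmorphD hh'.
have hE : h = 2^-1 by rewrite /h /h' fmorphV rmorph_nat.
pose P0 : 'M[R[i]]_2 := h%:M.
pose w : 'cV[R[i]]_2 := const_mx 1.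
pose u : 'cV[R[i]]_2 := \col_i (if i == 0 then 1 else -1).
pose sigma := h *: (w *m adj' w).
pose A := h *: (u *m adj' u).
have sE : forall i j, sigma i j = h.
  by move=> i j; rewrite !mxE big_ord1 !mxE rmorph1 !mulr1.
have AE : forall i j : 'I_2, A i j = h * (if i == j then 1 else -1).
  move=> i j; rewrite !mxE big_ord1 !mxE.
  case: i => [[|[|//]]] ?; case: j => [[|[|//]]] ? /=;
    rewrite ?rmorph1 ?rmorphN1; ring.
have P0E : forall i j : 'I_2, P0 i j = h *+ (i == j) by move=> i j; rewrite mxE.
have cP0 : classical P0.
  split; last by move=> i j /negbTE ij; rewrite P0E ij.
  split; last by rewrite mxtrace_scalar mulr2n.
  rewrite /P0 -diag_const_mx; apply: psd_diagmx => k; rewrite mxE //.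
have tA : is_test A.
  split; rewrite /loewner ?subr0; first exact: psd_outer.
  have -> : 1%:M - A = sigma.
    apply/matrixP => i j; rewrite sE [LHS]mxE [(- A) i j]mxE AE mxE.
    rewrite hE.
    by case: i => [[|[|//]]] ?; case: j => [[|[|//]]] ? /=; field.
  exact: psd_outer.
have trA : \tr (P0 *m A) = h.
  rewrite tr_diagL; last by move=> i j /negbTE ij; rewrite P0E ij.
  by rewrite big_ord_recr big_ord1 /= !P0E !AE /= !mulr1n !mulr1 -mulrDr hh mulr1.
have trsA : \tr (sigma *m A) = 0.
  rewrite /mxtrace; under eq_bigr do rewrite mxE.
  rewrite !big_ord_recr !big_ord0 /= !sE !AE /=.
  by rewrite !mulr1 !mulrN1 !add0r !mulrN addrN addNr addr0.
have h'pos : 0 < h' by rewrite /h' invr_gt0 ltr0n.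
have cond : ((1 - h')%:C)%C <= \tr (P0 *m A).
  rewrite trA /h lecR; move: hh' h'pos; clearbody h'; move=> *; lra.
exists P0, P0, sigma, h'; split.
  split => //.
  - split; first exact: psd_outer.
    by rewrite /mxtrace big_ord_recr big_ord1 /= !sE.
  - by move=> k; rewrite sE P0E eqxx mulr1n.
  - move: hh' h'pos; clearbody h'; move=> *; apply/andP; split; lra.
apply: (@le_lt_trans _ _ 0).
  apply: inf_le0; exists A; split => //.
  by rewrite trsA.
apply: (@lt_le_trans _ _ h') => //.
apply: lb_le_inf.
  by exists (complex.Re (\tr (P0 *m A))), A.
move=> x [B [_ cB ->]]; move: cB; rewrite lecE => /andP[_] /=.
move: hh'; clearbody h'; move=> *; lra.
Qed.

Unset Implicit Arguments.
Set Strict Implicit.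

Theorem proposition1 (R : realType) :
  (forall (Y : finType) (n : nat) (P0 P1 rho sigma : 'M[R[i]]_(dimYn Y n)) (eps : R),
     classical P0 -> classical P1 -> density rho -> density sigma ->
     (forall k, rho k k = P0 k k) -> (forall k, sigma k k = P1 k k) ->
     0 < eps <= 1 ->
     xiH eps rho sigma <= xiH eps P0 P1)
  /\
  (exists (Y : finType) (n : nat) (P0 P1 sigma : 'M[R[i]]_(dimYn Y n)) (eps : R),
     [/\ classical P0, classical P1, density sigma, (forall k, sigma k k = P1 k k)
        & 0 < eps < 1] /\ xiH eps P0 sigma < xiH eps P0 P1).
Proof.
split; first by move=> Y n; exact: part1.
exists bool, 1%N.
have -> : dimYn bool 1 = 2%N by rewrite /dimYn card_tuple card_bool.
exact: part2.
Qed.
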